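(* Let $U,V$ be nonempty sets, $f:U\times V\to\mathbb R$ bounded, $f^-=\sup_{u\in U}\inf_{v\in V}f(u,v)$, $f^+=\inf_{v\in V}\sup_{u\in U}f(u,v)$, and for $p\in[0,1]$ let $f^p=pf^-+(1-p)f^+$. Let $\alpha$ range over all maps $V\to U$ and $\beta$ over all maps $U\to V$. Then $$f^p=\sup_{(u,\alpha)}\inf_{(v,\beta)}\big[p\,f(u,\beta(u))+(1-p)f(\alpha(v),v)\big]=\inf_{(v,\beta)}\sup_{(u,\alpha)}\big[p\,f(u,\beta(u))+(1-p)f(\alpha(v),v)\big],$$ where the sup is over $(u,\alpha)\in U\times V^{\,\text{maps}}$ ($u\in U$, $\alpha:V\to U$) and the inf over $(v,\beta)$ with $v\in V$, $\beta:U\to V$. *)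

(* Defs.v *)
From Stdlib Require Import Reals Classical ClassicalEpsilon.
Open Scope R_scope.

Definition is_glb (E : R -> Prop) (m : R) : Prop :=
  (forall x, E x -> m <= x) /\ (forall b, (forall x, E x -> b <= x) -> b <= m).

(* Total supremum / infimum of a set of reals: the least upper bound
   (resp. greatest lower bound) when it exists, and 0 otherwise.
   In the theorem all sets involved are nonempty and bounded, so the
   default value is never used. *)
Definition Rsup (E : R -> Prop) : R :=
  match excluded_middle_informative (exists m, is_lub E m) with
  | left H => proj1_sig (constructive_indefinite_description _ H)
  | right _ => 0
  end.

Definition Rinf (E : R -> Prop) : R :=
  match excluded_middle_informative (exists m, is_glb E m) with
  | left H => proj1_sig (constructive_indefinite_description _ H)
  | right _ => 0
  end.

Definition supI {I : Type} (F : I -> R) : R := Rsup (fun x => exists i, x = F i).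
Definition infI {I : Type} (F : I -> R) : R := Rinf (fun x => exists i, x = F i).

Definition fminus {U V : Type} (f : U -> V -> R) : R :=
  supI (fun u => infI (fun v => f u v)).
Definition fplus {U V : Type} (f : U -> V -> R) : R :=
  infI (fun v => supI (fun u => f u v)).
Definition fp {U V : Type} (f : U -> V -> R) (p : R) : R :=
  p * fminus f + (1 - p) * fplus f.

(* Main.v *)
Require Import Defs.
From Stdlib Require Import Reals Lra ClassicalEpsilon FunctionalExtensionality.
Open Scope R_scope.

Lemma Rsup_lub E : (exists x, E x) -> bound E -> is_lub E (Rsup E).
Proof.
  intros Hne Hb. unfold Rsup. destruct excluded_middle_informative as [H|H].
  - exact (proj2_sig (constructive_indefinite_description _ H)).
  - exfalso. apply H. destruct (completeness E Hb Hne) as [m Hm]. eauto.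
Qed.

Lemma Rinf_glb E : (exists x, E x) -> (exists b, forall x, E x -> b <= x) ->
  is_glb E (Rinf E).
Proof.
  intros Hne Hb. unfold Rinf. destruct excluded_middle_informative as [H|H].
  - exact (proj2_sig (constructive_indefinite_description _ H)).
  - exfalso. apply H.
    destruct Hne as [x0 Hx0]. destruct Hb as [b Hb].
    destruct (completeness (fun y => E (- y))) as [m [Hm1 Hm2]].
    + exists (- b). intros y Hy. specialize (Hb _ Hy). lra.
    + exists (- x0). rewrite Ropp_involutive. exact Hx0.
    + exists (- m). split.
      * intros x Hx. assert (- x <= m). { apply Hm1. rewrite Ropp_involutive. exact Hx. } lra.
      * intros c Hc. assert (m <= - c). { apply Hm2. intros y Hy. specialize (Hc _ Hy). lra. } lra.
Qed.

Section Gen.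
Context {I : Type} (F : I -> R) (i0 : I) (B : R) (HB : forall i, - B <= F i <= B).

Lemma supI_lub : is_lub (fun x => exists i, x = F i) (supI F).
Proof.
  apply Rsup_lub. exists (F i0); eauto.
  exists B. intros x [i ->]. apply HB.
Qed.

Lemma infI_glb : is_glb (fun x => exists i, x = F i) (infI F).
Proof.
  apply Rinf_glb. exists (F i0); eauto.
  exists (- B). intros x [i ->]. apply HB.
Qed.

Lemma supI_ub i : F i <= supI F.
Proof. apply (proj1 supI_lub). eauto. Qed.

Lemma supI_le c : (forall i, F i <= c) -> supI F <= c.
Proof. intros H. apply (proj2 supI_lub). intros x [i ->]. auto. Qed.

Lemma infI_lb i : infI F <= F i.
Proof. apply (proj1 infI_glb). eauto. Qed.

Lemma infI_ge c : (forall i, c <= F i) -> c <= infI F.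
Proof. intros H. apply (proj2 infI_glb). intros x [i ->]. auto. Qed.

Lemma supI_approx eps : 0 < eps -> exists i, supI F - eps < F i.
Proof.
  intros He. apply NNPP. intros Hn.
  assert (supI F <= supI F - eps); [|lra].
  apply supI_le. intros i. apply Rnot_lt_le. intros Hl. apply Hn. eauto.
Qed.

Lemma infI_approx eps : 0 < eps -> exists i, F i < infI F + eps.
Proof.
  intros He. apply NNPP. intros Hn.
  assert (infI F + eps <= infI F); [|lra].
  apply infI_ge. intros i. apply Rnot_lt_le. intros Hl. apply Hn. eauto.
Qed.

Lemma supI_bnd : - B <= supI F <= B.
Proof.
  split. - pose proof (supI_ub i0). pose proof (HB i0). lra.
  - apply supI_le. intros; apply HB.
Qed.

Lemma infI_bnd : - B <= infI F <= B.
Proof.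
  split. - apply infI_ge. intros; apply HB.
  - pose proof (infI_lb i0). pose proof (HB i0). lra.
Qed.

Lemma supI_ge_approx c : (forall eps, 0 < eps -> exists i, c - eps <= F i) -> c <= supI F.
Proof.
  intros H. apply Rnot_lt_le. intros Hl.
  destruct (H ((c - supI F)/2)) as [i Hi]. lra.
  pose proof (supI_ub i). lra.
Qed.

Lemma infI_le_approx c : (forall eps, 0 < eps -> exists i, F i <= c + eps) -> infI F <= c.
Proof.
  intros H. apply Rnot_lt_le. intros Hl.
  destruct (H ((infI F - c)/2)) as [i Hi]. lra.
  pose proof (infI_lb i). lra.
Qed.
End Gen.

Lemma comb_bnd B p a b : 0 <= p <= 1 -> -B <= a <= B -> -B <= b <= B ->
  - B <= p * a + (1 - p) * b <= B.
Proof. intros. split; nra. Qed.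

Lemma comb_le p a b c d : 0 <= p <= 1 -> a <= c -> b <= d ->
  p * a + (1 - p) * b <= p * c + (1 - p) * d.
Proof. intros. nra. Qed.

Theorem mainTheorem10 (U V : Type) (f : U -> V -> R)
  (hU : inhabited U) (hV : inhabited V)
  (hbd : exists B, forall u v, Rabs (f u v) <= B)
  (p : R) (hp : 0 <= p <= 1) :
  fp f p =
    supI (fun ua : U * (V -> U) =>
      infI (fun vb : V * (U -> V) =>
        p * f (fst ua) (snd vb (fst ua)) + (1 - p) * f (snd ua (fst vb)) (fst vb)))
  /\
  fp f p =
    infI (fun vb : V * (U -> V) =>
      supI (fun ua : U * (V -> U) =>
        p * f (fst ua) (snd vb (fst ua)) + (1 - p) * f (snd ua (fst vb)) (fst vb))).
Proof.
  destruct hU as [u0]. destruct hV as [v0]. destruct hbd as [B HB].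
  assert (Hf : forall u v, - B <= f u v <= B).
  { intros u v. specialize (HB u v). revert HB. unfold Rabs. destruct (Rcase_abs (f u v)); intros; lra. }
  set (m := fun u => infI (fun v => f u v)).
  set (M := fun v => supI (fun u => f u v)).
  assert (Hm : forall u, - B <= m u <= B).
  { intros u. apply (infI_bnd _ v0). auto. }
  assert (HM : forall v, - B <= M v <= B).
  { intros v. apply (supI_bnd _ u0). auto. }
  assert (Hfm : fminus f = supI m) by reflexivity.
  assert (Hfp : fplus f = infI M) by reflexivity.
  assert (Hmin : - B <= supI m <= B) by (apply (supI_bnd _ u0); auto).
  assert (Hplus : - B <= infI M <= B) by (apply (infI_bnd _ v0); auto).
  set (g := fun (ua : U * (V -> U)) (vb : V * (U -> V)) =>
        p * f (fst ua) (snd vb (fst ua)) + (1 - p) * f (snd ua (fst vb)) (fst vb)).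
  assert (Hg : forall ua vb, - B <= g ua vb <= B).
  { intros. apply comb_bnd; auto. }
  change (fp f p = supI (fun ua => infI (fun vb => g ua vb)) /\
          fp f p = infI (fun vb => supI (fun ua => g ua vb))).
  unfold fp. rewrite Hfm, Hfp.
  split.
  - set (n := fun (al : V -> U) => infI (fun v => f (al v) v)).
    assert (Hn : forall al, - B <= n al <= B) by (intros; apply (infI_bnd _ v0); auto).
    assert (HG : forall ua, infI (fun vb => g ua vb) = p * m (fst ua) + (1 - p) * n (snd ua)).
    { intros [u al]. simpl. apply Rle_antisym.
      - apply (infI_le_approx _ (v0, fun _ => v0) B); [auto|].
        intros eps He.
        destruct (infI_approx (fun v => f u v) v0 B (Hf u) eps He) as [w Hw].
        destruct (infI_approx (fun v => f (al v) v) v0 B (fun v => Hf (al v) v) eps He) as [v Hv].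
        exists (v, fun _ => w). unfold g; simpl. fold (m u) in Hw. fold (n al) in Hv. nra.
      - apply (infI_ge _ (v0, fun _ => v0) B); [auto|].
        intros [v be]. unfold g; simpl. apply comb_le; auto.
        + apply (infI_lb _ v0 B); auto.
        + apply (infI_lb (fun v => f (al v) v) v0 B); auto. }
    rewrite (functional_extensionality _ _ HG).
    assert (HB2 : forall ua : U * (V -> U), - B <= p * m (fst ua) + (1 - p) * n (snd ua) <= B)
      by (intros; apply comb_bnd; auto).
    apply Rle_antisym.
    + apply (supI_ge_approx _ (u0, fun _ => u0) B HB2).
      intros eps He.
      destruct (supI_approx m u0 B Hm eps He) as [u Hu].
      destruct (choice (fun v u => M v - eps < f u v)) as [al Hal].
      { intros v. apply (supI_approx (fun u => f u v) u0 B); auto. }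
      exists (u, al). simpl.
      assert (infI M - eps <= n al).
      { apply (infI_ge _ v0 B); [auto|]. intros v. specialize (Hal v).
        pose proof (infI_lb M v0 B HM v). lra. }
      nra.
    + apply (supI_le _ (u0, fun _ => u0) B HB2).
      intros [u al]. simpl. apply comb_le; auto.
      * apply (supI_ub m u0 B); auto.
      * apply (infI_ge M v0 B HM). intros v.
        pose proof (infI_lb (fun v => f (al v) v) v0 B (fun v => Hf (al v) v) v).
        pose proof (supI_ub (fun u => f u v) u0 B (fun u => Hf u v) (al v)).
        fold (n al) in H. fold (M v) in H0. lra.
  - set (s := fun (be : U -> V) => supI (fun u => f u (be u))).
    assert (Hs : forall be, - B <= s be <= B) by (intros; apply (supI_bnd _ u0); auto).
    assert (HH : forall vb, supI (fun ua => g ua vb) = p * s (snd vb) + (1 - p) * M (fst vb)).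
    { intros [v be]. simpl. apply Rle_antisym.
      - apply (supI_le _ (u0, fun _ => u0) B); [auto|].
        intros [u al]. unfold g; simpl. apply comb_le; auto.
        + apply (supI_ub (fun u => f u (be u)) u0 B); auto.
        + apply (supI_ub (fun u => f u v) u0 B); auto.
      - apply (supI_ge_approx _ (u0, fun _ => u0) B); [auto|].
        intros eps He.
        destruct (supI_approx (fun u => f u (be u)) u0 B (fun u => Hf u (be u)) eps He) as [u Hu].
        destruct (supI_approx (fun u => f u v) u0 B (fun u => Hf u v) eps He) as [u' Hu'].
        exists (u, fun _ => u'). unfold g; simpl. fold (s be) in Hu. fold (M v) in Hu'. nra. }
    rewrite (functional_extensionality _ _ HH).
    assert (HB2 : forall vb : V * (U -> V), - B <= p * s (snd vb) + (1 - p) * M (fst vb) <= B)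
      by (intros; apply comb_bnd; auto).
    apply Rle_antisym.
    + apply (infI_ge _ (v0, fun _ => v0) B HB2).
      intros [v be]. simpl. apply comb_le; auto.
      * apply (supI_le m u0 B Hm). intros u.
        pose proof (infI_lb (fun v => f u v) v0 B (Hf u) (be u)).
        pose proof (supI_ub (fun u => f u (be u)) u0 B (fun u => Hf u (be u)) u).
        fold (m u) in H. fold (s be) in H0. lra.
      * apply (infI_lb M v0 B); auto.
    + apply (infI_le_approx _ (v0, fun _ => v0) B HB2).
      intros eps He.
      destruct (infI_approx M v0 B HM eps He) as [v Hv].
      destruct (choice (fun u v => f u v < m u + eps)) as [be Hbe].
      { intros u. apply (infI_approx (fun v => f u v) v0 B); auto. }
      exists (v, be). simpl.
      assert (s be <= supI m + eps).
      { apply (supI_le _ u0 B); [auto|]. intros u. specialize (Hbe u).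
        pose proof (supI_ub m u0 B Hm u). lra. }
      nra.
Qed.
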